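(* For all $a,b\in\mathbb R$, \[\frac{1}{1+|a|}\le\frac{e^{a-b}-1}{a-b}\cdot\frac{1+e^b}{1+e^a},\] where for $a=b$ the factor $\frac{e^{a-b}-1}{a-b}$ is interpreted as $1$. *)

(* Defs.v *)
From Stdlib Require Import Reals.
Open Scope R_scope.

Definition expm1_div (t : R) : R :=
  if Req_EM_T t 0 then 1 else (exp t - 1) / t.

(* Main.v *)
Require Import Defs.
From Stdlib Require Import Reals Lra Psatz.
From Coquelicot Require Import Coquelicot.
Open Scope R_scope.

Lemma expp1 (c : R) : 2 <= exp c + exp (- c).
Proof.
  assert (H := exp_pos c). assert (H' := exp_pos (-c)).
  assert (E : exp c * exp (-c) = 1) by (rewrite <- exp_plus; replace (c + - c) with 0 by ring; apply exp_0).
  set (y := exp c) in *. set (z := exp (-c)) in *.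
  assert (K : y * (y + z - 2) = (y - 1) ^ 2) by (replace ((y - 1) ^ 2) with (y ^ 2 + y * z - 2 * y) by (rewrite E; ring); ring).
  assert (0 <= y * (y + z - 2)) by (rewrite K; apply pow2_ge_0).
  destruct (Rle_or_lt 2 (y+z)); auto. nra.
Qed.

Lemma sinh_ge (s : R) : 0 <= s -> 2 * s <= exp s - exp (- s).
Proof.
  intros Hs. destruct (Req_dec s 0) as [->|Hn].
  { rewrite Ropp_0; lra. }
  destruct (MVT_cor2 (fun x => exp x - exp (- x) - 2 * x)
     (fun x => exp x + exp (- x) - 2) 0 s) as [c [Hc _]]; [lra| |].
  { intros c _. apply is_derive_Reals. auto_derive; auto. ring. }
  assert (H := expp1 c). rewrite Ropp_0, exp_0 in Hc. nra.
Qed.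

Lemma expinv (x : R) : exp x * exp (- x) = 1.
Proof. rewrite <- exp_plus; replace (x + - x) with 0 by ring; apply exp_0. Qed.

Lemma keypos (a t : R) : 0 <= a -> 0 < t ->
  t * (1 + exp a) <= (1 + a) * ((exp t - 1) + exp a * (1 - exp (- t))).
Proof.
  intros Ha Ht.
  assert (HX := exp_ineq1_le a). assert (HT := exp_ineq1_le t).
  assert (Ei := expinv t). assert (P := exp_pos t). assert (Pi := exp_pos (-t)).
  assert (PX := exp_pos a).
  destruct (Rle_or_lt t a) as [Hta|Hta].
  - assert (A1 : exp (- t) * (1 + t) <= 1) by nra.
    assert (A2 : t <= (1 + a) * (1 - exp (- t))) by nra.
    assert (A3 : t <= (1 + a) * (exp t - 1)) by nra.
    nra.
  - set (s := t - a).
    assert (Hs : 0 < s) by (unfold s; lra).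
    assert (ET : exp t = exp a * exp s) by (rewrite <- exp_plus; f_equal; unfold s; ring).
    assert (ETi : exp a * exp (- t) = exp (- s)) by (rewrite <- exp_plus; f_equal; unfold s; ring).
    assert (S := sinh_ge s (Rlt_le _ _ Hs)).
    assert (Es := exp_ineq1_le s). assert (Ps := exp_pos (-s)).
    replace ((1 + a) * ((exp t - 1) + exp a * (1 - exp (- t))))
      with ((1 + a) * (exp a * exp s - 1 + exp a - exp (- s))) by (rewrite ET, <- ETi; ring).
    replace t with (a + s) by (unfold s; ring).
    assert (B : 0 <= (1 + a) * exp s + 1 - s) by nra.
    assert (XB : (1 + a) * ((1 + a) * exp s + 1 - s) <= exp a * ((1 + a) * exp s + 1 - s)) by nra.
    nra.
Qed.

Lemma keyneg (a u : R) : 0 <= a -> 0 < u ->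
  u * (1 + exp a) <= (1 - exp (- u)) + exp a * (exp u - 1).
Proof.
  intros Ha Hu.
  assert (HX := exp_ineq1_le a). assert (HU := exp_ineq1_le u).
  assert (S := sinh_ge u (Rlt_le _ _ Hu)).
  assert (A : exp u - 1 - u <= exp a * (exp u - 1 - u)) by nra.
  nra.
Qed.

Lemma frac_le (p N D : R) : 0 < p -> 0 < D -> D <= N * p -> 1 / p <= N / D.
Proof.
  intros Hp HD H.
  assert (E : N / D - 1 / p = (N * p - D) / (D * p)) by (field; lra).
  assert (0 <= (N * p - D) / (D * p)).
  { apply Rdiv_le_0_compat; nra. }
  lra.
Qed.

Lemma main_pos (a b : R) : 0 <= a ->
  1 / (1 + a) <= expm1_div (a - b) * ((1 + exp b) / (1 + exp a)).
Proof.
  intros Ha. assert (PX := exp_pos a). unfold expm1_div.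
  destruct (Req_EM_T (a - b) 0) as [E|E].
  - replace b with a by lra. replace ((1 + exp a) / (1 + exp a)) with 1 by (field; lra).
    replace (1 * 1) with (1 / 1) by field. apply frac_le; lra.
  - destruct (Rle_or_lt 0 (a - b)) as [H|H].
    + set (t := a - b) in *.
      assert (Ht : 0 < t) by lra.
      assert (Eb : exp b = exp a * exp (- t)) by (rewrite <- exp_plus; f_equal; unfold t; ring).
      assert (Ei := expinv t).
      rewrite Eb.
      replace ((exp t - 1) / t * ((1 + exp a * exp (- t)) / (1 + exp a)))
        with (((exp t - 1) + exp a * (1 - exp (- t))) / (t * (1 + exp a)))
        by (assert (Q : (exp t - 1) * (1 + exp a * exp (- t)) - ((exp t - 1) + exp a * (1 - exp (- t))) = exp a * (exp t * exp (- t) - 1)) by ring;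
            rewrite Ei in Q; replace ((exp t - 1) + exp a * (1 - exp (- t))) with ((exp t - 1) * (1 + exp a * exp (- t))) by lra;
            field; lra).
      apply frac_le; [lra|nra|]. assert (K := keypos a t Ha Ht). lra.
    + set (u := b - a).
      assert (Hu : 0 < u) by (unfold u; lra).
      replace (a - b) with (- u) by (unfold u; ring).
      assert (Eb : exp b = exp a * exp u) by (rewrite <- exp_plus; f_equal; unfold u; ring).
      assert (Ei := expinv u).
      rewrite Eb.
      replace ((exp (- u) - 1) / - u * ((1 + exp a * exp u) / (1 + exp a)))
        with (((1 - exp (- u)) + exp a * (exp u - 1)) / (u * (1 + exp a))).
      2:{ assert (Q : (exp (- u) - 1) * (1 + exp a * exp u) + ((1 - exp (- u)) + exp a * (exp u - 1)) = exp a * (exp u * exp (- u) - 1)) by ring.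
          rewrite Ei in Q. replace ((1 - exp (- u)) + exp a * (exp u - 1)) with (- ((exp (- u) - 1) * (1 + exp a * exp u))) by lra.
          field; lra. }
      apply frac_le; [lra|nra|]. assert (K := keyneg a u Ha Hu).
      assert (0 <= ((1 - exp (- u)) + exp a * (exp u - 1)) * a) by (apply Rmult_le_pos; nra).
      lra.
Qed.

Lemma sym (a b : R) :
  expm1_div (- a - - b) * ((1 + exp (- b)) / (1 + exp (- a))) =
  expm1_div (a - b) * ((1 + exp b) / (1 + exp a)).
Proof.
  unfold expm1_div.
  assert (PA := exp_pos a). assert (PB := exp_pos b).
  destruct (Req_EM_T (- a - - b) 0) as [E|E]; destruct (Req_EM_T (a - b) 0) as [E'|E']; try lra.
  - replace b with a by lra. assert (P := exp_pos (- a)). field; lra.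
  - replace (- a - - b) with (b - a) by ring.
    rewrite !exp_Ropp. unfold Rminus. rewrite !exp_plus, !exp_Ropp.
    field. repeat split; try lra.
    all: try (intro; apply E'; lra); try (intro; apply E; lra).
Qed.

Theorem lemma4 (a b : R) :
  1 / (1 + Rabs a) <= expm1_div (a - b) * ((1 + exp b) / (1 + exp a)).
Proof.
  destruct (Rle_or_lt 0 a) as [H|H].
  - rewrite Rabs_pos_eq by lra. apply main_pos; lra.
  - rewrite Rabs_left by lra. rewrite <- sym. apply main_pos; lra.
Qed.
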